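(* Let $\sigma>0$, $r\in\mathbb{R}$, $A>0$ and $B>0$, and consider the system of ODEs \[ \dot{x}_d = X,\quad \dot{X}=\sigma\big(Y-X+A\sin(Bx_d)\big),\quad \dot{Y}=-XZ+rX-Y,\quad \dot{Z}=XY-Z . \] For every integer $k$, the point $(x_d,X,Y,Z)=(k\pi/B,0,0,0)$ is an equilibrium. If $k$ is even, the Jacobian matrix of the system at this equilibrium has a real positive eigenvalue, so this equilibrium is linearly unstable for all values of $\sigma>0$, $r$, $A>0$, $B>0$.
   Context: The system models a one-dimensional wave-particle entity (a walking droplet) in the sinusoidal potential $U(x)=(A/B)\cos(Bx)$: $x_d$ is the particle position, $X$ its velocity, and $Y,Z$ are wave-memory variables. The equilibria with even $k$ correspond to the particle sitting at the maxima of the potential. *)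

(* Defs.v *)
From HB Require Import structures.
From mathcomp Require Import all_boot all_order all_algebra.
From mathcomp Require Import all_classical all_reals all_analysis.
Set Implicit Arguments. Unset Strict Implicit. Unset Printing Implicit Defensive.
Import Order.TTheory GRing.Theory Num.Theory.
Local Open Scope ring_scope.

Definition vf (R : realType) (sigma r A B : R) (u : 'rV[R]_4) : 'rV[R]_4 :=
  let xd := u ord0 (inord 0) in
  let X  := u ord0 (inord 1) in
  let Y  := u ord0 (inord 2) in
  let Z  := u ord0 (inord 3) in
  \row_(i < 4)
    match val i with
    | 0 => X
    | 1 => sigma * (Y - X + A * sin (B * xd))
    | 2 => - (X * Z) + r * X - Y
    | _ => X * Y - Z
    end.

(* The Jacobian used in the statement is MathComp-Analysis' derive.jacobian
   (jacobian f p := lin1_mx ('d f p)). *)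

Definition eqpt (R : realType) (B : R) (k : int) : 'rV[R]_4 :=
  \row_(i < 4) (if val i == 0%N then k%:~R * pi / B else 0).

(* Main.v *)
Require Import Defs.
From HB Require Import structures.
From mathcomp Require Import all_boot all_order all_algebra.
From mathcomp Require Import all_classical all_reals all_analysis.
From mathcomp Require Import ring lra.
Import Order.TTheory GRing.Theory Num.Theory.
Import numFieldNormedType.Exports.
Local Open Scope ring_scope.

Section S.
Variable R : realType.
Definition c (i : nat) : 'rV[R]_4 -> R := fun u => u ord0 (inord i).

Global Instance is_diff_c (i : nat) (p : 'rV[R]_4) : is_diff p (c i) (c i).
Proof.
have @f : {linear 'rV[R]_4 -> R}.
  by exists (c i); do 2![eexists]; do ?[constructor];
     rewrite /c ?mxE// => ? *; rewrite ?mxE//; move=> ?; rewrite !mxE.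
have cf : continuous f by apply: coord_continuous.
rewrite (_ : c i = f) //; apply: DiffDef; first exact: linear_differentiable.
exact: diff_lin.
Qed.

Global Instance is_diff_sin (y : R) : is_diff y sin ( *:%R^~ (cos y)).
Proof.
have d1 : derivable sin y 1 := @derivable_sin R y.
apply: DiffDef; first exact/derivable1_diffP.
rewrite deriv1E // derive1E derive_val //.
Qed.

Variables sigma r A B : R.
Definition g1 : 'rV[R]_4 -> R := sigma *: (c 2 - c 1 + A *: (sin \o (B *: c 0))).
Definition g2 : 'rV[R]_4 -> R := - (c 1 * c 3) + r *: c 1 - c 2.
Definition g3 : 'rV[R]_4 -> R := c 1 * c 2 - c 3.
Definition e (i : nat) : 'rV[R]_4 := delta_mx ord0 (inord i).
Definition F : 'rV[R]_4 -> 'rV[R]_4 := (( *:%R^~ (e 0)) \o c 1) + (( *:%R^~ (e 1)) \o g1) + (( *:%R^~ (e 2)) \o g2) + (( *:%R^~ (e 3)) \o g3).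

Lemma inord_eq (j : 'I_4) (i : nat) : (i < 4)%N -> (j == inord i) = (val j == i).
Proof. by move=> hi; rewrite -(inj_eq val_inj) /= inordK. Qed.

Lemma vfF : vf sigma r A B = F.
Proof.
apply/funext => u; apply/rowP => j.
rewrite /F /= !mxE /= !inord_eq //.
case: j => [[|[|[|[|j]]]] Hj] //=; rewrite /g1 /g2 /g3 /c /= ?mulr1 ?mulr0 ?addr0 ?add0r //.
Qed.
End S.
Arguments c {R}. Arguments is_diff_c {R}. Arguments is_diff_sin {R}. Arguments e {R}.

Lemma sin_intpi (R : realType) (k : int) : sin (k%:~R * pi) = 0 :> R.
Proof.
have hn : forall n : nat, sin (n%:R * pi) = 0 :> R.
  elim=> [|n IH]; first by rewrite mul0r sin0.
  by rewrite -addn1 natrD mulrDl mul1r sinDpi IH oppr0.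
case: k => n; first by rewrite /= hn.
by rewrite NegzE mulrNz mulNr sinN -[(n.+1)%:~R]/((n.+1)%:R) hn oppr0.
Qed.

Lemma cos_evenpi (R : realType) (k : int) : (2 %| k)%Z -> cos (k%:~R * pi) = 1 :> R.
Proof.
move=> /divzK <-; rewrite intrM; set m := (k %/ 2)%Z.
have hn : forall n : nat, cos (n%:R * 2%:~R * pi) = 1 :> R.
  elim=> [|n IH]; first by rewrite mul0r mul0r cos0.
  rewrite -addn1 natrD mulrDl mulrDl mul1r.
  have e2 : (2%:~R * pi : R) = pi *+ 2 by rewrite -[2%:~R]/(2%:R : R) mulr_natl.
  by rewrite e2 cosD2pi IH.
case: m => n; first exact: hn.
by rewrite NegzE intrN !mulNr cosN hn.
Qed.


Lemma pos_root (R : realType) (s a r : R) : 0 < s -> 0 < a ->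
  exists2 l : R, 0 < l & l ^+ 3 + (1 + s) * l ^+ 2 + (s - s*r - a) * l - a = 0.
Proof.
move=> hs ha.
pose q : {poly R} := 'X^3 + (1+s)%:P * 'X^2 + (s - s*r - a)%:P * 'X - a%:P.
have qE : forall x, q.[x] = x ^+ 3 + (1 + s) * x ^+ 2 + (s - s * r - a) * x - a.
  by move=> x; rewrite /q !hornerE.
have hK : 0 <= s * `|r| by rewrite mulr_ge0 // ltW.
pose b := 1 + s * `|r| + a.
have hb : b = 1 + s * `|r| + a by [].
clearbody b.
have hsr : 0 <= s * `|r| - s * r.
  have h := ler_norm r.
  by rewrite -mulrBr mulr_ge0 //; [exact: ltW | lra].
have hb1 : 1 <= b by lra.
have hqb : 0 <= q.[b].
  rewrite qE.
  have H1 : b ^+ 2 <= b ^+ 3.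
    by rewrite [b ^+ 3]exprS ler_peMl // ?exprn_ge0 //; lra.
  have H2 : b ^+ 2 = b + s * `|r| * b + a * b by rewrite expr2 hb; ring.
  have H3 : 0 <= (s * `|r| - s * r) * b by rewrite mulr_ge0 //; lra.
  have H4 : 0 <= (1 + s) * b ^+ 2 by rewrite mulr_ge0 ?exprn_ge0 //; lra.
  have H5 : 0 <= s * b by rewrite mulr_ge0 //; lra.
  lra.
have [x /andP[x0 xb] rx] := @poly_ivt R q 0 b (le_trans ler01 hb1)
  (ltac:(rewrite qE hqb andbT; lra)).
exists x; last by move/rootP: rx; rewrite qE.
rewrite lt_neqAle x0 andbT; apply/eqP => x0'.
by move/rootP: rx; rewrite qE -x0' !expr0n /=; lra.
Qed.

Lemma eqptE (R : realType) (B : R) (k : int) (i : nat) : (i < 4)%N ->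
  eqpt B k ord0 (inord i) = if i == 0%N then k%:~R * pi / B else 0.
Proof. by move=> hi; rewrite /eqpt mxE /= inordK. Qed.

Theorem mainTheorem1 (R : realType) (sigma r A B : R) :
  0 < sigma -> 0 < A -> 0 < B ->
  forall k : int,
    vf sigma r A B (eqpt B k) = 0 /\
    ((2 %| k)%Z ->
      exists2 lam : R, 0 < lam &
        eigenvalue (jacobian (vf sigma r A B) (eqpt B k)) lam).
Proof.
move=> hs hA hB k.
have hBk : B * (k%:~R * pi / B) = k%:~R * pi.
  by rewrite mulrC divfK // gt_eqF.
split.
  apply/rowP => j; rewrite /vf !mxE /= !inordK //= hBk sin_intpi.
  by case: j => [[|[|[|[|j]]]] Hj] //=; ring.
move=> k2.
have [l l0 hl] := @pos_root R _ _ r hs (mulr_gt0 (mulr_gt0 hs hA) hB).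
exists l => //.
set p := eqpt B k.
have h0 := is_diff_c 0 p.
have h1 := is_diff_c 1 p.
have h2 := is_diff_c 2 p.
have h3 := is_diff_c 3 p.
have hsn := is_diff_comp (is_diffZ B h0) (is_diff_sin _).
have hg1 := is_diffZ sigma (is_diffD (is_diffB h2 h1) (is_diffZ A hsn)).
have hg2 := is_diffB (is_diffD (is_diffN (is_diffM h1 h3)) (is_diffZ r h1)) h2.
have hg3 := is_diffB (is_diffM h1 h2) h3.
have hF := is_diffD (is_diffD (is_diffD (is_diff_comp h1 (is_diff_scalel _ (e 0)))
   (is_diff_comp hg1 (is_diff_scalel _ (e 1))))
   (is_diff_comp hg2 (is_diff_scalel _ (e 2))))
   (is_diff_comp hg3 (is_diff_scalel _ (e 3))).
have dF := @diff_val _ _ _ _ _ _ _ hF.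
have difF := @ex_diff _ _ _ _ _ _ _ hF.
apply/eigenvalueP.
pose v : 'rV[R]_4 := \row_(j < 4) [:: 1; l; r * l / (l + 1); 0]`_j.
exists v; last first.
  apply/negP => /eqP /rowP /(_ ord0); rewrite !mxE /=; apply/eqP; exact: oner_neq0.
rewrite -deriveEjacobian vfF //.
rewrite deriveE // dF.
apply/rowP => j; rewrite /= !mxE /= !inord_eq //.
have cp : forall i : nat, (i < 4)%N -> c i p = if i == 0%N then k%:~R * pi / B else 0.
  by move=> i hi; rewrite /c /p eqptE.
have cv : forall i : nat, (i < 4)%N -> c i v = [:: 1; l; r * l / (l + 1); 0]`_i.
  by move=> i hi; rewrite /c /v mxE /= inordK.
rewrite !fctE /= !cp // !cv //=.
have sc : forall x y : R, x *: y = x * y by [].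
rewrite !sc hBk cos_evenpi //.
have l1 : l + 1 != 0 by rewrite gt_eqF // ltr_wpDl // ltW.
case: j => [[|[|[|[|j]]]] Hj] //=.
- by ring.
- have id : l ^+ 2 + sigma * l - sigma * A * B - sigma * (r * l / (l + 1)) =
     (l ^+ 3 + (1 + sigma) * l ^+ 2 + (sigma - sigma * r - sigma * A * B) * l -
    sigma * A * B) / (l + 1) by field.
  rewrite hl mul0r in id.
  rewrite !mulr1 !mulr0 !addr0 add0r.
  rewrite expr2 in id; lra.
- rewrite !mulr1 !mulr0 !addr0 add0r !mul0r.
  by field.
- by rewrite !mulr0 !mul0r !addr0 !add0r oppr0 mul0r.
Qed.
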